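(* For $k\ge0$ let $\bar H_k\in\mathbb{R}^{p\times p}$ be (random) symmetric matrices with symmetric indefinite factorizations $\bar H_k=P_k^TL_kB_kL_k^TP_k$, and suppose $\bar H_k\to H(\theta^* )$ a.s. Let $B_k=Q_k\Lambda_kQ_k^T$ be an eigendecomposition, $\Lambda_k=\mathrm{diag}(\lambda_{k1},\dots,\lambda_{kp})$, and with a constant threshold $\underline{\tau}>0$ set $\bar\Lambda_k=\mathrm{diag}(\max\{\underline{\tau},|\lambda_{kj}|\})_{j=1}^p$ and $\bar{\bar H}_k=P_k^TL_kQ_k\bar\Lambda_kQ_k^TL_k^TP_k$. Assume the eigenvalues of $H(\theta^* )$ satisfy $0<\underline{\lambda}^*<|\lambda_j(H(\theta^* ))|<\bar\lambda^*<\infty$ for $j=1,\dots,p$. Then there exists $K_2$ such that for all $k>K_2$ the eigenvalues and the condition number of $\bar{\bar H}_k$ are bounded uniformly in $k$.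
   Context: In the factorization: $P_k$ permutation, $B_k$ block diagonal with symmetric $1\times1$ or $2\times2$ blocks, $L_k$ unit lower triangular with entries bounded in magnitude by a fixed constant independent of $k$; hence there are constants $0<\underline{\sigma}\le\bar\sigma$, independent of $k$ and the sample path, with all singular values of $L_k$ in $[\underline{\sigma},\bar\sigma]$. $H(\theta^* )$ is the Hessian of the loss at its minimizer and $\bar H_k$ the running Hessian estimate of a second-order simultaneous-perturbation stochastic approximation algorithm. *)

(* Defs.v *)
From HB Require Import structures.
From mathcomp Require Import all_boot all_order all_algebra.
From mathcomp Require Import all_classical all_reals.
From mathcomp Require Import all_analysis.
Set Implicit Arguments. Unset Strict Implicit. Unset Printing Implicit Defensive.
Import Order.TTheory GRing.Theory Num.Theory.
Local Open Scope ring_scope.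
Local Open Scope classical_set_scope.

Section Defs.
Variable R : realType.

Definition sqnorm (p : nat) (x : 'cV[R]_p) : R := \sum_(i < p) (x i 0) ^+ 2.

Definition opnorm2 (p : nat) (A : 'M[R]_p) : R :=
  sup [set Num.sqrt (sqnorm (A *m x)) | x in [set x : 'cV[R]_p | sqnorm x = 1]].

Definition cond2 (p : nat) (A : 'M[R]_p) : R := opnorm2 A * opnorm2 (invmx A).

Definition unit_lower_tri (p : nat) (L : 'M[R]_p) : Prop :=
  (forall i j : 'I_p, (i < j)%N -> L i j = 0) /\ (forall i : 'I_p, L i i = 1).

(* all singular values of L lie in [slo, shi], i.e. slo ||x|| <= ||L x|| <= shi ||x|| *)
Definition sing_vals_in (p : nat) (L : 'M[R]_p) (slo shi : R) : Prop :=
  forall x : 'cV[R]_p,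
    slo ^+ 2 * sqnorm x <= sqnorm (L *m x) <= shi ^+ 2 * sqnorm x.

(* symmetric block diagonal with 1x1 or 2x2 diagonal blocks: symmetric,
   tridiagonal, and no two consecutive off-diagonal entries are nonzero
   (so the 2x2 blocks do not overlap). *)
Definition block_diag_12 (p : nat) (B : 'M[R]_p) : Prop :=
  B^T = B /\
  (forall i j : 'I_p, (i.+1 < j)%N -> B i j = 0) /\
  (forall i j k : 'I_p, j = i.+1 :> nat -> k = j.+1 :> nat -> B i j = 0 \/ B j k = 0).

End Defs.

(* Main.v *)
Require Import Defs.
From HB Require Import structures.
From mathcomp Require Import all_boot all_order all_algebra.
From mathcomp Require Import all_classical all_reals.
From mathcomp Require Import all_analysis.
From mathcomp Require Import ring lra fingroup perm.
Import Order.TTheory GRing.Theory Num.Theory numFieldNormedType.Exports.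
Set Implicit Arguments. Unset Strict Implicit. Unset Printing Implicit Defensive.
Local Open Scope ring_scope.
Local Open Scope classical_set_scope.

Section Aux.
Variable R : realType.
Variable p : nat.
Implicit Types (A B : 'M[R]_p) (x y u v : 'cV[R]_p).
Implicit Types (C M m t : R).

Definition dot u v : R := \sum_(i < p) u i 0 * v i 0.

Lemma dotE u v : dot u v = (u^T *m v) 0 0.
Proof. by rewrite /dot mxE; apply: eq_bigr => i _; rewrite mxE. Qed.

Lemma dot_tr A u v : dot (A *m u) v = dot u (A^T *m v).
Proof. by rewrite !dotE trmx_mul mulmxA. Qed.

Lemma sqnormE x : sqnorm x = dot x x.
Proof. by apply: eq_bigr => i _; rewrite expr2. Qed.

Lemma sqnorm_ge0 x : 0 <= sqnorm x.
Proof. by apply: sumr_ge0 => i _; rewrite sqr_ge0. Qed.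

Lemma dot_le t u v : 0 < t -> 2 * dot u v <= t * sqnorm u + sqnorm v / t.
Proof.
move=> t0; rewrite /dot /sqnorm mulr_sumr mulr_sumr mulr_suml -big_split /=.
apply: ler_sum => i _.
set a := u i 0; set b := v i 0.
have -> : t * a ^+ 2 + b ^+ 2 / t = 2 * (a * b) + (t * a - b) ^+ 2 / t.
  by field; rewrite gt_eqF.
by rewrite lerDl divr_ge0 ?sqr_ge0 // ltW.
Qed.

Definition ub A (M : R) := forall x, sqnorm (A *m x) <= M * sqnorm x.
Definition lb A (m : R) := forall x, m * sqnorm x <= sqnorm (A *m x).

Lemma ub_mul A B M1 M2 : 0 <= M1 -> ub A M1 -> ub B M2 -> ub (A *m B) (M1 * M2).
Proof.
move=> h0 hA hB x; rewrite -mulmxA (le_trans (hA _)) // -mulrA ler_wpM2l //.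
Qed.

Lemma lb_mul A B m1 m2 : 0 <= m1 -> lb A m1 -> lb B m2 -> lb (A *m B) (m1 * m2).
Proof.
move=> h0 hA hB x; rewrite -mulmxA (le_trans _ (hA _)) // -mulrA ler_wpM2l //.
Qed.

Lemma ub_weak A M M' : M <= M' -> ub A M -> ub A M'.
Proof. by move=> h hA x; rewrite (le_trans (hA x)) // ler_wpM2r // sqnorm_ge0. Qed.

Lemma lb_weak A m m' : m' <= m -> lb A m -> lb A m'.
Proof. by move=> h hA x; rewrite (le_trans _ (hA x)) // ler_wpM2r // sqnorm_ge0. Qed.

Lemma ub_tr A M : 0 < M -> ub A M -> ub A^T M.
Proof.
move=> M0 hA y; set w := A^T *m y.
have e : sqnorm w = dot y (A *m w) by rewrite sqnormE {1}/w dot_tr trmxK.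
have := dot_le (t:=M) y (A *m w) M0; rewrite -e.
have := hA w => h1 h2.
have h3 : sqnorm (A *m w) / M <= sqnorm w.
  by rewrite ler_pdivrMr // mulrC.
lra.
Qed.

Lemma lb_tr A m : 0 < m -> lb A m -> A \in unitmx -> lb A^T m.
Proof.
move=> m0 hA uA y; set z := invmx A *m y; set w := A^T *m y.
have yz : y = A *m z by rewrite /z mulKVmx.
have e : sqnorm y = dot z w by rewrite sqnormE {1}yz dot_tr.
have := dot_le (t:=m) z w m0; rewrite -e.
have := hA z; rewrite -yz => h1 h2.
have h3 : sqnorm y <= sqnorm w / m.
  have : 0 <= sqnorm z by apply: sqnorm_ge0.
  nra.
by rewrite mulrC -ler_pdivlMr.
Qed.

Lemma ub_inv A m : 0 < m -> lb A m -> A \in unitmx -> ub (invmx A) m^-1.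
Proof.
move=> m0 hA uA y; have := hA (invmx A *m y); rewrite mulKVmx //.
by rewrite mulrC -ler_pdivlMr // mulrC.
Qed.

Lemma orth_norm A x : A^T *m A = 1%:M -> sqnorm (A *m x) = sqnorm x.
Proof. by move=> h; rewrite !sqnormE dot_tr mulmxA h mul1mx. Qed.

Lemma perm_norm (s : 'S_p) x : sqnorm (perm_mx s *m x) = sqnorm x.
Proof. by apply: orth_norm; rewrite tr_perm_mx -perm_mxM mulVg perm_mx1. Qed.

Lemma diag_norm (d : 'rV[R]_p) x :
  sqnorm (diag_mx d *m x) = \sum_(i < p) (d 0 i) ^+ 2 * (x i 0) ^+ 2.
Proof. by rewrite /sqnorm mul_diag_mx; apply: eq_bigr => i _; rewrite mxE exprMn. Qed.

Lemma sumsq (a : 'I_p -> R) : (\sum_i a i) ^+ 2 <= p%:R * \sum_i a i ^+ 2.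
Proof.
rewrite expr2 mulr_suml.
apply: (@le_trans _ _ (\sum_i \sum_j (a i ^+ 2 + a j ^+ 2) / 2)).
  apply: ler_sum => i _; rewrite mulr_sumr; apply: ler_sum => j _.
  have := sqr_ge0 (a i - a j). rewrite sqrrB -mulr_natr. lra.
under eq_bigr => i _ do rewrite -mulr_suml big_split /= sumr_const card_ord.
rewrite -mulr_suml big_split /= sumr_const card_ord sumrMnl.
move: (\sum_(i < p) a i ^+ 2) => S; rewrite -mulr_natr; lra.
Qed.

Lemma entry_ub A C : 0 <= C -> (forall i j, `|A i j| <= C) ->
  ub A (p%:R * (p%:R * C ^+ 2)).
Proof.
move=> C0 hC x.
apply: (@le_trans _ _ (\sum_(i < p) p%:R * (C ^+ 2 * sqnorm x))); last first.
  by rewrite sumr_const card_ord le_eqVlt -mulr_natl; apply/orP; left; apply/eqP; ring.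
rewrite /sqnorm; apply: ler_sum => i _.
rewrite mxE; apply: (le_trans (sumsq _)); rewrite ler_wpM2l // mulr_sumr.
apply: ler_sum => j _; rewrite exprMn ler_wpM2r ?sqr_ge0 //.
by rewrite -real_normK ?num_real // ler_sqr ?nnegrE.
Qed.

Lemma diag_lb (d : 'rV[R]_p) m : 0 <= m -> (forall i, m <= d 0 i) -> lb (diag_mx d) (m ^+ 2).
Proof.
move=> m0 hd x; rewrite diag_norm /sqnorm mulr_sumr; apply: ler_sum => i _.
by rewrite ler_wpM2r ?sqr_ge0 // ler_sqr ?nnegrE // (le_trans m0).
Qed.

Lemma diag_ub (d : 'rV[R]_p) M : (forall i, `|d 0 i| <= M) -> ub (diag_mx d) (M ^+ 2).
Proof.
move=> hd x; rewrite diag_norm /sqnorm mulr_sumr; apply: ler_sum => i _.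
rewrite ler_wpM2r ?sqr_ge0 // -real_normK ?num_real // ler_sqr ?nnegrE //.
exact: le_trans (hd i).
Qed.

Lemma diag_entry (d : 'rV[R]_p) M i : ub (diag_mx d) M -> d 0 i ^+ 2 <= M.
Proof.
move=> h; have := h (delta_mx i 0); rewrite diag_norm /sqnorm.
rewrite (bigD1 i) //= big1; last by move=> k /negPf ki; rewrite mxE ki /= expr0n mulr0.
rewrite (bigD1 i) //= big1; last by move=> k /negPf ki; rewrite mxE ki /= expr0n.
by rewrite !mxE !eqxx /= expr1n !addr0 !mulr1.
Qed.

Lemma sqnorm_eq0 x : sqnorm x = 0 -> x = 0.
Proof.
move=> /psumr_eq0P h; apply/matrixP => i j; rewrite (ord1 j) mxE.
by apply/eqP; rewrite -sqrf_eq0; apply/eqP/h => // k _; rewrite sqr_ge0.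
Qed.

Lemma opnorm_le A M : 0 <= M -> ub A (M ^+ 2) -> 0 <= opnorm2 A <= M.
Proof.
move=> M0 h; rewrite /opnorm2.
set S := [set _ | _ in _].
have ubS : ubound S M.
  move=> _ [x /= hx <-]; rewrite -(ger0_norm M0) -sqrtr_sqr ler_sqrt ?sqr_ge0 //.
  by have := h x; rewrite hx mulr1.
case: (pselect (exists x : 'cV[R]_p, sqnorm x = 1)) => [[x0 hx0]|nex].
  have S0 : S (Num.sqrt (sqnorm (A *m x0))) by exists x0.
  apply/andP; split; last by apply: (ge_sup _ ubS); exists (Num.sqrt (sqnorm (A *m x0))).
  apply: le_trans (sqrtr_ge0 (sqnorm (A *m x0))) _; apply: ub_le_sup => //; exists M; exact: ubS.
have -> : S = set0.
  by apply/seteqP; split => // _ [x /= hx _]; apply: nex; exists x.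
by rewrite sup0 lexx.
Qed.

Lemma ult_unit A : unit_lower_tri A -> A \in unitmx.
Proof.
move=> [h1 h2]; rewrite unitmxE det_trig; last by apply/is_trig_mxP => i j; apply: h1.
by rewrite big1 ?unitr1 // => i _; apply: h2.
Qed.


Lemma norm_eq_ub A : (forall x, sqnorm (A *m x) = sqnorm x) -> ub A 1 /\ lb A 1.
Proof. by move=> h; split => x; rewrite h mul1r. Qed.

Lemma dotC u v : dot u v = dot v u.
Proof. by apply: eq_bigr => i _; rewrite mulrC. Qed.

Lemma dot_scale a u : dot u (a *: u) = a * sqnorm u.
Proof.
rewrite /dot /sqnorm mulr_sumr; apply: eq_bigr => i _; rewrite mxE; ring.
Qed.

Lemma sqnormZ a u : sqnorm (a *: u) = a ^+ 2 * sqnorm u.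
Proof.
rewrite /sqnorm mulr_sumr; apply: eq_bigr => i _; rewrite mxE exprMn //.
Qed.

Lemma dot_diag_ge0 (d : 'rV[R]_p) y : (forall i, 0 <= d 0 i) -> 0 <= dot y (diag_mx d *m y).
Proof.
move=> h; apply: sumr_ge0 => i _; rewrite mul_diag_mx mxE mulrCA.
by apply: mulr_ge0 => //; rewrite -expr2 sqr_ge0.
Qed.

Lemma diag_unit (d : 'rV[R]_p) : (forall i, 0 < d 0 i) -> diag_mx d \in unitmx.
Proof.
move=> h; rewrite unitmxE det_trig ?diag_mx_is_trig // unitfE.
rewrite gt_eqF // prodr_gt0 // => i _; rewrite mxE eqxx mulr1n; exact: h.
Qed.

End Aux.

Theorem theoremA4 (R : realType) (p : nat)
  (Hstar : 'M[R]_p) (lam_lo lam_hi tau c slo shi : R)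
  (Hbar : nat -> 'M[R]_p) (P L B Q : nat -> 'M[R]_p) (lam : nat -> 'rV[R]_p)
  (HstarS : Hstar^T = Hstar)
  (Hlam_lo : 0 < lam_lo)
  (Heig : forall a : R, eigenvalue Hstar a -> lam_lo < `|a| < lam_hi)
  (Htau : 0 < tau)
  (Hsym : forall k, (Hbar k)^T = Hbar k)
  (HP : forall k, is_perm_mx (P k))
  (HL : forall k, unit_lower_tri (L k))
  (HLc : forall k (i j : 'I_p), `|L k i j| <= c)
  (Hslo : 0 < slo) (Hsle : slo <= shi)
  (HLsv : forall k, sing_vals_in (L k) slo shi)
  (HB : forall k, block_diag_12 (B k))
  (Hfact : forall k, Hbar k = (P k)^T *m L k *m B k *m (L k)^T *m P k)
  (HQ : forall k, (Q k)^T *m Q k = 1%:M)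
  (Heigdec : forall k, B k = Q k *m diag_mx (lam k) *m (Q k)^T)
  (Hconv : forall i j : 'I_p, (fun k => Hbar k i j) @ \oo --> Hstar i j) :
  let Lbar k := diag_mx (\row_j Num.max tau `|lam k 0 j|) in
  let HHbar k := (P k)^T *m L k *m Q k *m Lbar k *m (Q k)^T *m (L k)^T *m P k in
  exists K2 : nat, exists lo hi kap : R,
    0 < lo /\
    forall k : nat, (K2 < k)%N ->
      (forall a : R, eigenvalue (HHbar k) a -> lo <= a <= hi) /\
      cond2 (HHbar k) <= kap.
Proof.
move=> Lbar HHbar.
pose C := \sum_(i < p) \sum_(j < p) (`|Hstar i j| + 1).
have hC : forall i j, `|Hstar i j| + 1 <= C.
  move=> i j; rewrite /C (bigD1 i) //= (bigD1 j) //= -addrA lerDl.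
  apply: addr_ge0; first by apply: sumr_ge0 => *; apply: addr_ge0.
  by apply: sumr_ge0 => *; apply: sumr_ge0 => *; apply: addr_ge0.
have C0 : 0 <= C by apply: sumr_ge0 => *; apply: sumr_ge0 => *; apply: addr_ge0.
have ev : \forall k \near \oo, forall i j, `|Hstar i j - Hbar k i j| < 1.
  apply: filter_forall => i; apply: filter_forall => j.
  by move: (Hconv i j) => /cvgr_dist_lt /(_ _ ltr01).
have [N _ hN] := ev.
pose Hb := p%:R * (p%:R * C ^+ 2).
have Hb0 : 0 <= Hb by rewrite /Hb !mulr_ge0 ?ler0n ?sqr_ge0.
pose s2 := slo ^+ 2.
have s20 : 0 < s2 by rewrite /s2 exprn_gt0.
have shi0 : 0 < shi by apply: lt_le_trans Hsle.
pose Bb := (s2^-1 * Hb) * s2^-1.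
have si0 : 0 <= s2^-1 by rewrite invr_ge0 ltW.
have Bb0 : 0 <= Bb by rewrite /Bb !mulr_ge0.
pose T := tau + (1 + Bb).
pose lo := tau * s2.
pose hi := shi ^+ 2 * T.
have lo0 : 0 < lo by rewrite /lo mulr_gt0.
have T0 : 0 < T by rewrite /T; apply: addr_gt0 => //; apply: ltr_wpDr.
have hi0 : 0 < hi by rewrite /hi mulr_gt0 // exprn_gt0.
have key : forall k, (N <= k)%N ->
   [/\ ub (HHbar k) (hi ^+ 2), lb (HHbar k) (lo ^+ 2), HHbar k \in unitmx,
       (HHbar k)^T = HHbar k & forall x, 0 <= dot x (HHbar k *m x)].
  move=> k kN.
  have /is_perm_mxP [s Ps] := HP k.
  have Pn : forall x, sqnorm (P k *m x) = sqnorm x by rewrite Ps; exact: perm_norm.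
  have PTn : forall x, sqnorm ((P k)^T *m x) = sqnorm x.
    by rewrite Ps tr_perm_mx; exact: perm_norm.
  have [Pu Pl] := norm_eq_ub Pn.
  have [PTu PTl] := norm_eq_ub PTn.
  have uP : P k \in unitmx by rewrite Ps unitmx_perm.
  have uPT : (P k)^T \in unitmx by rewrite unitmx_tr.
  have QQ : Q k *m (Q k)^T = 1%:M by apply: mulmx1C.
  have Qn : forall x, sqnorm (Q k *m x) = sqnorm x by move=> x; apply: orth_norm.
  have QTn : forall x, sqnorm ((Q k)^T *m x) = sqnorm x.
    by move=> x; apply: orth_norm; rewrite trmxK.
  have [Qu Ql] := norm_eq_ub Qn.
  have [QTu QTl] := norm_eq_ub QTn.
  have [uQT uQ] := mulmx1_unit (HQ k).
  have uL := ult_unit (HL k).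
  have uLT : (L k)^T \in unitmx by rewrite unitmx_tr.
  have Lu : ub (L k) (shi ^+ 2) by move=> x; have /andP[] := HLsv k x.
  have Ll : lb (L k) s2 by move=> x; have /andP[] := HLsv k x.
  have LTu := ub_tr (exprn_gt0 2 shi0) Lu.
  have LTl := lb_tr s20 Ll uL.
  have Hu : ub (Hbar k) Hb.
    apply: entry_ub => // i j.
    have h1 := hN k kN i j; have h2 := hC i j.
    have := ler_normD (Hstar i j) (Hbar k i j - Hstar i j).
    rewrite addrCA subrr addr0 distrC; lra.
  pose X := (P k)^T *m L k; pose Y := (L k)^T *m P k.
  have uX : X \in unitmx by rewrite unitmx_mul uPT uL.
  have uY : Y \in unitmx by rewrite unitmx_mul uLT uP.
  have BE : B k = invmx X *m Hbar k *m invmx Y.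
    have -> : Hbar k = X *m B k *m Y by rewrite Hfact /X /Y !mulmxA.
    by rewrite mulmxA mulKmx // mulmxK.
  have Xl : lb X s2 by move: (lb_mul ler01 PTl Ll); rewrite mul1r.
  have Yl : lb Y s2 by move: (lb_mul (ltW s20) LTl Pl); rewrite mulr1.
  have Xi := ub_inv s20 Xl uX.
  have Yi := ub_inv s20 Yl uY.
  have Bu : ub (B k) Bb.
    rewrite BE; apply: ub_mul Yi; first by rewrite mulr_ge0 // invr_ge0 ltW.
    by apply: ub_mul Hu => //; rewrite invr_ge0 ltW.
  have Dl : diag_mx (lam k) = (Q k)^T *m B k *m Q k.
    by rewrite Heigdec !mulmxA HQ mul1mx -mulmxA HQ mulmx1.
  have Du0 : ub (diag_mx (lam k)) (1 * Bb * 1).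
    rewrite Dl; apply: ub_mul Qu; first by rewrite mul1r.
    exact: ub_mul ler01 QTu Bu.
  have lamb : forall j, `|lam k 0 j| <= 1 + Bb.
    move=> j; have := diag_entry j Du0; rewrite mul1r mulr1 -real_normK ?num_real // => h.
    have := normr_ge0 (lam k 0 j); nra.
  have dE : forall j, (\row_j Num.max tau `|lam k 0 j|) 0 j = Num.max tau `|lam k 0 j|.
    by move=> j; rewrite mxE.
  have Dlb : lb (Lbar k) (tau ^+ 2).
    by apply: diag_lb; [exact: ltW | move=> i; rewrite dE le_max lexx].
  have Dub : ub (Lbar k) (T ^+ 2).
    apply: diag_ub => i; rewrite dE ger0_norm; last by rewrite le_max (ltW Htau).
    rewrite ge_max; apply/andP; split; first by rewrite /T lerDl; apply: addr_ge0.
    by rewrite /T (le_trans (lamb i)) // lerDr ltW.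
  have uD : Lbar k \in unitmx.
    by apply: diag_unit => i; rewrite dE (lt_le_trans Htau) // le_max lexx.
  pose M := (Q k)^T *m (L k)^T *m P k.
  have HE : HHbar k = M^T *m Lbar k *m M by rewrite /HHbar /M !trmx_mul !trmxK !mulmxA.
  have MTE : M^T = (P k)^T *m (L k *m Q k) by rewrite /M !trmx_mul !trmxK.
  have Mu : ub M (1 * shi ^+ 2 * 1).
    apply: ub_mul Pu; first by rewrite mul1r sqr_ge0.
    exact: ub_mul QTu LTu.
  have Ml : lb M (1 * s2 * 1).
    apply: lb_mul Pl; first by rewrite mul1r ltW.
    exact: lb_mul QTl LTl.
  have MTu : ub M^T (1 * (shi ^+ 2 * 1)).
    by rewrite MTE; apply: ub_mul => //; apply: ub_mul => //; rewrite sqr_ge0.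
  have MTl : lb M^T (1 * (s2 * 1)).
    by rewrite MTE; apply: lb_mul => //; apply: lb_mul => //; rewrite ltW.
  have uM : M \in unitmx by rewrite /M !unitmx_mul uQT uLT uP.
  have uMT : M^T \in unitmx by rewrite unitmx_tr.
  clearbody M.
  split.
  - have := ub_mul _ (ub_mul _ MTu Dub) Mu.
    rewrite HE (_ : 1 * (shi ^+ 2 * 1) * T ^+ 2 * (1 * shi ^+ 2 * 1) = hi ^+ 2).
      by apply; apply: mulr_ge0; rewrite ?mul1r ?mulr1 ?sqr_ge0.
    by rewrite /hi; ring.
  - have := lb_mul _ (lb_mul _ MTl Dlb) Ml.
    rewrite HE (_ : 1 * (s2 * 1) * tau ^+ 2 * (1 * s2 * 1) = lo ^+ 2).
      by apply; rewrite ?mulr_ge0 ?mul1r ?mulr1 ?sqr_ge0 ?ltW.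
    by rewrite /lo; ring.
  - by rewrite HE !unitmx_mul uMT uD uM.
  - by rewrite HE !trmx_mul trmxK tr_diag_mx !mulmxA.
  - move=> x; rewrite HE -!mulmxA dotC dot_tr trmxK dotC.
    by apply: dot_diag_ge0 => i; rewrite dE (le_trans (ltW Htau)) // le_max lexx.
exists N, lo, hi, (hi * lo^-1); split => // k /ltnW kN.
have [Hu Hl uH Hs psd] := key k kN.
split.
  move=> a /eigenvalueP [v hv vn0].
  pose x := v^T.
  have hx : HHbar k *m x = a *: x.
    rewrite /x -{1}Hs -trmx_mul hv; apply/matrixP => i j; rewrite !mxE //.
  have sx : 0 < sqnorm x.
    rewrite lt_def sqnorm_ge0 andbT; apply/eqP => /sqnorm_eq0 x0.
    by move: vn0; rewrite -(trmxK v) -/x x0 trmx0 eqxx.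
  have a0 : 0 <= a by have := psd x; rewrite hx dot_scale pmulr_lge0.
  have h1 := Hl x; have h2 := Hu x; rewrite hx sqnormZ in h1 h2.
  have l1 : lo ^+ 2 <= a ^+ 2 by rewrite -(ler_pM2r sx).
  have l2 : a ^+ 2 <= hi ^+ 2 by rewrite -(ler_pM2r sx).
  apply/andP; split; nra.
have [hO1 hO2] := andP (opnorm_le (ltW hi0) Hu).
have Hi := ub_inv (exprn_gt0 2 lo0) Hl uH.
rewrite -exprVn in Hi.
have ilo : 0 <= lo^-1 by rewrite invr_ge0 ltW.
have [hO3 hO4] := andP (opnorm_le ilo Hi).
rewrite /cond2; exact: ler_pM.
Qed.
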